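(* Assume the vector variational inequality defined by $F$ and $K$ is monotone. (a) If $\mathcal{A}$ is a bounded connected component of $\mathrm{Sol}^w(F,K)$, then $S^{-1}(\mathcal{A})=\{\xi\in\Delta:S(\xi)\cap\mathcal{A}\neq\emptyset\}$ is open in the induced topology of $\Delta$. (b) If $\mathcal{A}$ is a bounded connected component of $\mathrm{Sol}^{pr}(F,K)$, then $\{\xi\in\operatorname{ri}\Delta:S(\xi)\cap\mathcal{A}\neq\emptyset\}$ is open in the induced topology of $\operatorname{ri}\Delta$.
   Context: Let $K\subset\mathbb{R}^n$ be a nonempty closed convex set and $F_1,\dots,F_m:K\to\mathbb{R}^n$ continuous functions; write $F=(F_1,\dots,F_m)$ and $F(x)(u)=(\langle F_1(x),u\rangle,\dots,\langle F_m(x),u\rangle)$. The problem is monotone if each $F_l$ is monotone on $K$: $\langle F_l(y)-F_l(x),y-x\rangle\ge0$ for all $x,y\in K$. Let $\Delta=\{\xi\in\mathbb{R}^m_+ : \sum_l\xi_l=1\}$, $\operatorname{ri}\Delta=\{\xi\in\Delta:\xi_l>0,\ l=1,\dots,m\}$, and $F_\xi=\sum_l\xi_lF_l$. For $G:K\to\mathbb{R}^n$, $\mathrm{Sol}(G,K)=\{x\in K:\langle G(x),y-x\rangle\ge0\ \forall y\in K\}$. The weak Pareto solution set $\mathrm{Sol}^w(F,K)$ is the set of $x\in K$ with $F(x)(x-y)\notin\operatorname{int}\mathbb{R}^m_+$ for all $y\in K$; it is known that $\mathrm{Sol}^w(F,K)=\bigcup_{\xi\in\Delta}\mathrm{Sol}(F_\xi,K)$.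 The proper Pareto solution set is $\mathrm{Sol}^{pr}(F,K)=\bigcup_{\xi\in\operatorname{ri}\Delta}\mathrm{Sol}(F_\xi,K)$. The basic multifunction is $S(\xi)=\mathrm{Sol}(F_\xi,K)$ for $\xi\in\Delta$. *)

(* Defs.v *)
From Stdlib Require Import Reals.
From Stdlib Require Fin.
Open Scope R_scope.

Definition vec (n : nat) : Type := Fin.t n -> R.

Fixpoint fsum (n : nat) : (Fin.t n -> R) -> R :=
  match n return (Fin.t n -> R) -> R with
  | O => fun _ => 0
  | S k => fun f => f Fin.F1 + fsum k (fun i => f (Fin.FS i))
  end.

Definition dot {n : nat} (x y : vec n) : R := fsum n (fun i => x i * y i).
Definition vsub {n : nat} (x y : vec n) : vec n := fun i => x i - y i.
Definition vnorm {n : nat} (x : vec n) : R := sqrt (dot x x).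
Definition vdist {n : nat} (x y : vec n) : R := vnorm (vsub x y).

Definition vopen {n : nat} (U : vec n -> Prop) : Prop :=
  forall x, U x -> exists eps, 0 < eps /\ forall y, vdist x y < eps -> U y.
Definition vclosed {n : nat} (C : vec n -> Prop) : Prop :=
  vopen (fun x => ~ C x).
Definition vconvex {n : nat} (K : vec n -> Prop) : Prop :=
  forall x y t, K x -> K y -> 0 <= t <= 1 -> K (fun i => t * x i + (1 - t) * y i).
Definition vbounded {n : nat} (A : vec n -> Prop) : Prop :=
  exists r, forall x, A x -> vnorm x <= r.

Definition vconnected {n : nat} (C : vec n -> Prop) : Prop :=
  ~ exists U V : vec n -> Prop,
      vopen U /\ vopen V /\
      (forall x, C x -> U x \/ V x) /\
      (exists x, C x /\ U x) /\ (exists x, C x /\ V x) /\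
      (forall x, C x -> U x -> V x -> False).

Definition conn_component {n : nat} (S C : vec n -> Prop) : Prop :=
  (exists x, C x) /\ (forall x, C x -> S x) /\ vconnected C /\
  (forall D : vec n -> Prop, vconnected D -> (forall x, C x -> D x) ->
     (forall x, D x -> S x) -> forall x, D x -> C x).

Definition vcontinuous_on {n : nat} (K : vec n -> Prop) (G : vec n -> vec n) : Prop :=
  forall x, K x -> forall eps, 0 < eps -> exists delta, 0 < delta /\
    forall y, K y -> vdist x y < delta -> vdist (G x) (G y) < eps.
Definition monotone_on {n : nat} (K : vec n -> Prop) (G : vec n -> vec n) : Prop :=
  forall x y, K x -> K y -> 0 <= dot (vsub (G y) (G x)) (vsub y x).

Definition Sol {n : nat} (G : vec n -> vec n) (K : vec n -> Prop) (x : vec n) : Prop :=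
  K x /\ forall y, K y -> 0 <= dot (G x) (vsub y x).

Definition simplex {m : nat} (xi : vec m) : Prop :=
  (forall l, 0 <= xi l) /\ fsum m xi = 1.
Definition ri_simplex {m : nat} (xi : vec m) : Prop :=
  (forall l, 0 < xi l) /\ fsum m xi = 1.

Definition Fcomb {m n : nat} (F : Fin.t m -> vec n -> vec n) (xi : vec m) : vec n -> vec n :=
  fun x i => fsum m (fun l => xi l * F l x i).

Definition SolW {m n : nat} (F : Fin.t m -> vec n -> vec n) (K : vec n -> Prop) (x : vec n) : Prop :=
  K x /\ forall y, K y -> ~ (forall l, 0 < dot (F l x) (vsub x y)).

(* proper Pareto solutions: union over ri Delta of Sol(F_xi,K) *)
Definition SolPr {m n : nat} (F : Fin.t m -> vec n -> vec n) (K : vec n -> Prop) (x : vec n) : Prop :=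
  exists xi, ri_simplex xi /\ Sol (Fcomb F xi) K x.

Definition rel_open {m : nat} (D T : vec m -> Prop) : Prop :=
  (forall xi, T xi -> D xi) /\
  forall xi, T xi -> exists eps, 0 < eps /\ forall eta, D eta -> vdist xi eta < eps -> T eta.

(* Main.v *)
Require Import Defs.
From Stdlib Require Import Reals.
From Stdlib Require Fin.
From Stdlib Require Import Lra Lia Psatz ClassicalEpsilon Classical.
Open Scope R_scope.

Lemma fsum_ext n (f g : Fin.t n -> R) : (forall i, f i = g i) -> fsum n f = fsum n g.
Proof. revert f g; induction n; simpl; intros f g H; [reflexivity|].
  rewrite H, (IHn _ (fun i => g (Fin.FS i))); auto. Qed.

Lemma fsum_plus n (f g : Fin.t n -> R) : fsum n (fun i => f i + g i) = fsum n f + fsum n g.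
Proof. revert f g; induction n; simpl; intros; [lra|]. rewrite IHn; lra. Qed.

Lemma fsum_scal n c (f : Fin.t n -> R) : fsum n (fun i => c * f i) = c * fsum n f.
Proof. revert f; induction n; simpl; intros; [lra|]. rewrite IHn; lra. Qed.

Lemma fsum_zero n : fsum n (fun _ => 0) = 0.
Proof. induction n; simpl; [lra|]. rewrite IHn; lra. Qed.

Lemma fsum_le n (f g : Fin.t n -> R) : (forall i, f i <= g i) -> fsum n f <= fsum n g.
Proof. revert f g; induction n; simpl; intros f g H; [lra|].
  assert (fsum n (fun i => f (Fin.FS i)) <= fsum n (fun i => g (Fin.FS i))) by (apply IHn; auto).
  specialize (H Fin.F1). lra. Qed.

Lemma fsum_nonneg n (f : Fin.t n -> R) : (forall i, 0 <= f i) -> 0 <= fsum n f.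
Proof. intros H. rewrite <- (fsum_zero n). apply fsum_le; auto. Qed.

Lemma fsum_ge_term n (f : Fin.t n -> R) j : (forall i, 0 <= f i) -> f j <= fsum n f.
Proof. revert f j; induction n; intros f j H; [inversion j|].
  apply (Fin.caseS' j); simpl.
  - pose proof (fsum_nonneg n (fun i => f (Fin.FS i)) (fun i => H _)). lra.
  - intro p. pose proof (IHn (fun i => f (Fin.FS i)) p (fun i => H _)). pose proof (H Fin.F1). lra. Qed.

Lemma fsum_bound n (f : Fin.t n -> R) c : (forall i, f i <= c) -> fsum n f <= INR n * c.
Proof. revert f; induction n; simpl; intros f H; [lra|].
  pose proof (IHn (fun i => f (Fin.FS i)) (fun i => H _)). pose proof (H Fin.F1).
  change (f Fin.F1 + fsum n (fun i => f (Fin.FS i)) <= INR (S n) * c).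
  rewrite S_INR. lra. Qed.

Lemma fsum_exchange m n (f : Fin.t m -> Fin.t n -> R) :
  fsum m (fun i => fsum n (fun j => f i j)) = fsum n (fun j => fsum m (fun i => f i j)).
Proof. revert n f; induction m; simpl; intros n f.
  - symmetry. apply (eq_trans (fsum_ext _ _ (fun _ => 0) (fun _ => eq_refl))). apply fsum_zero.
  - rewrite IHm. rewrite <- fsum_plus. reflexivity. Qed.

Lemma dot_comm n (x y : vec n) : dot x y = dot y x.
Proof. unfold dot. apply fsum_ext; intros; ring. Qed.

Lemma dot_lin_l n (x y z : vec n) a b :
  dot (fun i => a * x i + b * y i) z = a * dot x z + b * dot y z.
Proof. unfold dot. rewrite <- !fsum_scal, <- fsum_plus. apply fsum_ext; intros; ring. Qed.

Lemma dot_lin_r n (x y z : vec n) a b :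
  dot z (fun i => a * x i + b * y i) = a * dot z x + b * dot z y.
Proof. rewrite dot_comm, dot_lin_l, (dot_comm _ z x), (dot_comm _ z y). ring. Qed.

Lemma dot_ext n (x x' y y' : vec n) : (forall i, x i = x' i) -> (forall i, y i = y' i) -> dot x y = dot x' y'.
Proof. intros; unfold dot; apply fsum_ext; intros; rewrite H, H0; auto. Qed.

Lemma dot_sq_nonneg n (x : vec n) : 0 <= dot x x.
Proof. apply fsum_nonneg; intros; nra. Qed.

Lemma coord_le_dot n (x : vec n) i : x i * x i <= dot x x.
Proof. apply (fsum_ge_term n (fun i => x i * x i)); intros; nra. Qed.

Lemma vnorm_lt n (x : vec n) e : 0 < e -> dot x x < e * e -> vnorm x < e.
Proof. intros. unfold vnorm. rewrite <- (sqrt_square e) by lra. apply sqrt_lt_1; [apply dot_sq_nonneg|nra|lra]. Qed.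

Lemma vnorm_le n (x : vec n) e : 0 <= e -> dot x x <= e * e -> vnorm x <= e.
Proof. intros. unfold vnorm. rewrite <- (sqrt_square e) by lra. apply sqrt_le_1; [apply dot_sq_nonneg|nra|lra]. Qed.

Lemma vnorm_nonneg n (x : vec n) : 0 <= vnorm x.
Proof. apply sqrt_pos. Qed.

Lemma vnorm_sq n (x : vec n) : vnorm x * vnorm x = dot x x.
Proof. unfold vnorm. apply sqrt_sqrt. apply dot_sq_nonneg. Qed.

Lemma vnorm_le_sq n (x : vec n) e : vnorm x <= e -> dot x x <= e * e.
Proof. intros. rewrite <- vnorm_sq. pose proof (vnorm_nonneg n x). nra. Qed.

Lemma vnorm_lt_sq n (x : vec n) e : vnorm x < e -> dot x x < e * e.
Proof. intros. rewrite <- vnorm_sq. pose proof (vnorm_nonneg n x). nra. Qed.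

Lemma coord_le_vnorm n (x : vec n) i : Rabs (x i) <= vnorm x.
Proof. assert (Rabs (x i) * Rabs (x i) <= vnorm x * vnorm x).
  { rewrite <- Rabs_mult, vnorm_sq, Rabs_pos_eq by nra. apply coord_le_dot. }
  pose proof (vnorm_nonneg n x). pose proof (Rabs_pos (x i)). nra. Qed.

Lemma vdist_coord n (x y : vec n) i : Rabs (x i - y i) <= vdist x y.
Proof. apply (coord_le_vnorm n (vsub x y) i). Qed.

Lemma coords_small_vdist n e : 0 < e -> exists eta, 0 < eta /\
  forall x y : vec n, (forall i, Rabs (x i - y i) < eta) -> vdist x y < e.
Proof. intros He. exists (e / (INR n + 1)). pose proof (pos_INR n) as Hn.
  split. apply Rdiv_lt_0_compat; lra.
  intros x y H. apply vnorm_lt; auto.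
  set (c := e / (INR n + 1)).
  assert (dot (vsub x y) (vsub x y) <= INR n * (c * c)).
  { apply fsum_bound. intros i. specialize (H i). change (Rabs (x i - y i) < c) in H. unfold vsub.
    assert (H1 : Rabs (x i - y i) * Rabs (x i - y i) <= c * c).
    { pose proof (Rabs_pos (x i - y i)). nra. }
    rewrite <- Rabs_mult in H1. pose proof (Rle_abs ((x i - y i) * (x i - y i))). lra. }
  assert (INR n * (c * c) < e * e).
  { assert (Hce: c * (INR n + 1) = e) by (unfold c; field; lra).
    assert (0 < c) by (unfold c; apply Rdiv_lt_0_compat; lra). clearbody c. nra. }
  lra. Qed.

Lemma inv_small eps : 0 < eps -> exists N, forall k, (k >= N)%nat -> / INR (S k) < eps.
Proof. intros He. destruct (INR_archimed eps 1 He) as [N HN]. exists N. intros k Hk.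
  assert (INR N <= INR k) by (apply le_INR; lia). rewrite S_INR.
  assert (0 < INR k + 1) by (pose proof (pos_INR k); lra).
  apply Rmult_lt_reg_r with (INR k + 1); auto. rewrite Rinv_l by lra. nra. Qed.

Definition vcv {n} (u : nat -> vec n) (x : vec n) := forall i, Un_cv (fun k => u k i) (x i).

Lemma fin_uniform n (P : Fin.t n -> nat -> Prop) :
  (forall i, exists N, forall k, (k >= N)%nat -> P i k) -> exists N, forall k, (k >= N)%nat -> forall i, P i k.
Proof. revert P; induction n; intros P H.
  - exists O. intros k _ i. inversion i.
  - destruct (IHn (fun i k => P (Fin.FS i) k)) as [N1 H1]. { intros i; apply H. }
    destruct (H Fin.F1) as [N2 H2]. exists (max N1 N2). intros k Hk i.
    apply (Fin.caseS' i). apply H2; lia. intro p. apply H1; lia. Qed.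

Lemma vdist_sym n (x y : vec n) : vdist x y = vdist y x.
Proof. unfold vdist, vnorm. f_equal. unfold dot, vsub. apply fsum_ext; intros; ring. Qed.

Lemma vcv_vdist n (u : nat -> vec n) x : vcv u x -> forall e, 0 < e -> exists N, forall k, (k >= N)%nat -> vdist (u k) x < e.
Proof. intros H e He. destruct (coords_small_vdist n e He) as [eta [Heta Hs]].
  destruct (fin_uniform n (fun i k => Rabs (u k i - x i) < eta)) as [N HN].
  { intros i. destruct (H i eta Heta) as [N HN]. exists N. intros k Hk. apply HN; auto. }
  exists N. intros k Hk. apply Hs. apply HN; auto. Qed.

Lemma vcv_vdist' n (u : nat -> vec n) x : vcv u x -> forall e, 0 < e -> exists N, forall k, (k >= N)%nat -> vdist x (u k) < e.
Proof. intros H e He. destruct (vcv_vdist n u x H e He) as [N HN]. exists N; intros; rewrite vdist_sym; auto. Qed.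

Lemma vdist_vcv n (u : nat -> vec n) x : (forall e, 0 < e -> exists N, forall k, (k >= N)%nat -> vdist (u k) x < e) -> vcv u x.
Proof. intros H i e He. destruct (H e He) as [N HN]. exists N. intros k Hk. unfold R_dist.
  pose proof (vdist_coord n (u k) x i). specialize (HN k Hk). lra. Qed.

Definition incr (phi : nat -> nat) := forall k, (phi k < phi (S k))%nat.

Lemma incr_ge phi : incr phi -> forall k, (k <= phi k)%nat.
Proof. intros H; induction k; [lia|]. specialize (H k). lia. Qed.

Lemma incr_mono phi : incr phi -> forall a b, (a <= b)%nat -> (phi a <= phi b)%nat.
Proof. intros H a b Hab. induction Hab; [lia|]. specialize (H m). lia. Qed.

Lemma incr_comp phi psi : incr phi -> incr psi -> incr (fun k => phi (psi k)).
Proof. intros H1 H2 k. pose proof (H2 k). assert (S (psi k) <= psi (S k))%nat by lia.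
  pose proof (incr_mono phi H1 _ _ H0). specialize (H1 (psi k)). lia. Qed.

Lemma cv_subseq (u : nat -> R) l phi : Un_cv u l -> incr phi -> Un_cv (fun k => u (phi k)) l.
Proof. intros H Hp e He. destruct (H e He) as [N HN]. exists N. intros k Hk. apply HN.
  pose proof (incr_ge phi Hp k). lia. Qed.

Lemma vcv_subseq n (u : nat -> vec n) x phi : vcv u x -> incr phi -> vcv (fun k => u (phi k)) x.
Proof. intros H Hp i. apply (cv_subseq (fun k => u k i)); auto. Qed.

Lemma fsum_cv n (f : nat -> Fin.t n -> R) g : (forall i, Un_cv (fun k => f k i) (g i)) ->
  Un_cv (fun k => fsum n (f k)) (fsum n g).
Proof. revert f g; induction n; simpl; intros f g H.
  - intros e He; exists O; intros; unfold R_dist; rewrite Rminus_diag, Rabs_R0; lra.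
  - apply CV_plus. apply H. apply (IHn (fun k i => f k (Fin.FS i))). intros; apply H. Qed.

Lemma dot_cv n (u v : nat -> vec n) x y : vcv u x -> vcv v y -> Un_cv (fun k => dot (u k) (v k)) (dot x y).
Proof. intros H1 H2. unfold dot. apply (fsum_cv n (fun k i => u k i * v k i)). intros; apply CV_mult; auto. Qed.

Lemma cv_le (u : nat -> R) l c : Un_cv u l -> (forall k, u k <= c) -> l <= c.
Proof. intros H Hc. destruct (Rle_or_lt l c); auto. destruct (H (l - c)) as [N HN]; [lra|].
  specialize (HN N (le_n _)). specialize (Hc N). unfold R_dist in HN.
  pose proof (Rle_abs (l - u N)). rewrite Rabs_minus_sym in HN. lra. Qed.

Lemma cv_ge (u : nat -> R) l c : Un_cv u l -> (forall k, c <= u k) -> c <= l.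
Proof. intros H Hc. assert (- l <= - c). apply (cv_le (fun k => - u k)). apply CV_opp; auto.
  intros; specialize (Hc k); lra. lra. Qed.

Lemma cv_ge_ev (u : nat -> R) l c : Un_cv u l -> (exists N, forall k, (k >= N)%nat -> c <= u k) -> c <= l.
Proof. intros H [N HN]. apply (cv_ge (fun k => u (k + N)%nat)).
  intros e He. destruct (H e He) as [M HM]. exists M. intros; apply HM; lia.
  intros; apply HN; lia. Qed.

Lemma cv_const c : Un_cv (fun _ => c) c.
Proof. intros e He; exists O; intros; unfold R_dist; rewrite Rminus_diag, Rabs_R0; lra. Qed.

Lemma BW_R (u : nat -> R) M : (forall k, Rabs (u k) <= M) -> exists phi l, incr phi /\ Un_cv (fun k => u (phi k)) l.
Proof. intros HM. destruct (Rtopology.Bolzano_Weierstrass u (fun c => -M <= c <= M) (Rtopology.compact_P3 _ _))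
    as [l Hl]. { intros k; specialize (HM k); pose proof (Rle_abs (u k)); pose proof (Rle_abs (- u k)); rewrite Rabs_Ropp in *; lra. }
  assert (Hc : forall N k, exists p, (N <= p)%nat /\ Rabs (u p - l) < / INR (S k)).
  { intros N k. assert (0 < / INR (S k)) by (apply Rinv_0_lt_compat, lt_0_INR; lia).
    destruct (Hl (Rtopology.disc l (mkposreal _ H)) N) as [p [Hp1 Hp2]].
    - exists (mkposreal _ H). intros y Hy; exact Hy.
    - exists p; split; auto. }
  pose (pick N k := proj1_sig (constructive_indefinite_description _ (Hc N k))).
  assert (Hpick : forall N k, (N <= pick N k)%nat /\ Rabs (u (pick N k) - l) < / INR (S k)).
  { intros; unfold pick; destruct constructive_indefinite_description; auto. }
  pose (phi := fix phi k := match k with O => pick O O | S k' => pick (S (phi k')) k end).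
  exists phi, l. split.
  - intro k. simpl. destruct (Hpick (S (phi k)) (S k)); lia.
  - intros e He. destruct (inv_small e He) as [N HN]. exists N. intros k Hk. unfold R_dist.
    specialize (HN k Hk). destruct k; simpl; [destruct (Hpick O O)|destruct (Hpick (S (phi k)) (S k))]; lra. Qed.

Lemma BW_vec n (u : nat -> vec n) M : (forall k i, Rabs (u k i) <= M) -> exists phi x, incr phi /\ vcv (fun k => u (phi k)) x.
Proof. revert u; induction n; intros u HM.
  - exists (fun k => k), (fun _ => 0). split. intro; lia. intro i; inversion i.
  - destruct (BW_R (fun k => u k Fin.F1) M) as [phi1 [l [Hp1 Hl]]]. { intros; apply HM. }
    destruct (IHn (fun k i => u (phi1 k) (Fin.FS i))) as [phi2 [x [Hp2 Hx]]]. { intros; apply HM. }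
    exists (fun k => phi1 (phi2 k)), (fun i => Fin.caseS' i (fun _ => R) l x).
    split. apply incr_comp; auto.
    intro i. apply (Fin.caseS' i); simpl.
    + apply (cv_subseq (fun k => u (phi1 k) Fin.F1)); auto.
    + intro p. apply (Hx p). Qed.

Lemma BW_bounded n (u : nat -> vec n) R0 : (forall k, vnorm (u k) <= R0) -> exists phi x, incr phi /\ vcv (fun k => u (phi k)) x.
Proof. intros H. apply (BW_vec n u R0). intros k i. eapply Rle_trans; [apply coord_le_vnorm|]; auto. Qed.

Lemma vnorm_cv n (u : nat -> vec n) x : vcv u x -> Un_cv (fun k => dot (u k) (u k)) (dot x x).
Proof. intros H; apply dot_cv; auto. Qed.

Lemma open_seq n (U : vec n -> Prop) (u : nat -> vec n) x : vopen U -> U x -> vcv u x -> exists N, forall k, (k >= N)%nat -> U (u k).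
Proof. intros HU Hx Hc. destruct (HU x Hx) as [e [He H]]. destruct (vcv_vdist' n u x Hc e He) as [N HN].
  exists N; intros; apply H; auto. Qed.

Lemma closed_seq n (C : vec n -> Prop) (u : nat -> vec n) x : vclosed C -> (forall k, C (u k)) -> vcv u x -> C x.
Proof. intros HC Hu Hc. destruct (classic (C x)) as [|Hn]; auto. destruct (open_seq n _ u x HC Hn Hc) as [N HN].
  exfalso; apply (HN N (le_n _)); auto. Qed.

Lemma cont_seq n (K : vec n -> Prop) (G : vec n -> vec n) (u : nat -> vec n) x :
  vcontinuous_on K G -> K x -> (forall k, K (u k)) -> vcv u x -> vcv (fun k => G (u k)) (G x).
Proof. intros HG Hx Hu Hc. apply vdist_vcv. intros e He. destruct (HG x Hx e He) as [d [Hd H]].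
  destruct (vcv_vdist' n u x Hc d Hd) as [N HN]. exists N. intros k Hk. rewrite vdist_sym. apply H; auto. Qed.

Fixpoint nsum (k : nat) (f : nat -> R) : R := match k with O => 0 | S k => nsum k f + f k end.

Lemma nsum_ext k f g : (forall i, (i < k)%nat -> f i = g i) -> nsum k f = nsum k g.
Proof. induction k; simpl; intros H; auto. rewrite IHk, H; auto. Qed.

Lemma nsum_plus k f g : nsum k (fun i => f i + g i) = nsum k f + nsum k g.
Proof. induction k; simpl; [lra|]. rewrite IHk; lra. Qed.

Lemma nsum_scal k c f : nsum k (fun i => c * f i) = c * nsum k f.
Proof. induction k; simpl; [lra|]. rewrite IHk; lra. Qed.

Lemma nsum_minus k f g : nsum k (fun i => f i - g i) = nsum k f - nsum k g.
Proof. induction k; simpl; [lra|]. rewrite IHk; lra. Qed.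

Lemma nsum_le k f g : (forall i, (i < k)%nat -> f i <= g i) -> nsum k f <= nsum k g.
Proof. induction k; simpl; intros H; [lra|]. assert (nsum k f <= nsum k g) by (apply IHk; auto).
  specialize (H k). assert (f k <= g k) by (apply H; lia). lra. Qed.

Lemma nsum_opp k f : nsum k (fun i => - f i) = - nsum k f.
Proof. induction k; simpl; [lra|]. rewrite IHk; lra. Qed.

Lemma nsum_zero k : nsum k (fun _ => 0) = 0.
Proof. induction k; simpl; lra. Qed.

Lemma nsum_nonneg k f : (forall i, (i < k)%nat -> 0 <= f i) -> 0 <= nsum k f.
Proof. intros H. rewrite <- (nsum_zero k). apply nsum_le; auto. Qed.

Lemma nsum_pos k f j : (j < k)%nat -> (forall i, (i < k)%nat -> 0 <= f i) -> 0 < f j -> 0 < nsum k f.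
Proof. induction k; simpl; intros Hj H Hf; [lia|].
  assert (0 <= nsum k f) by (apply nsum_nonneg; auto).
  destruct (Nat.eq_dec j k). subst; lra. assert (0 < nsum k f) by (apply IHk; auto; lia).
  assert (0 <= f k) by (apply H; lia). lra. Qed.

Lemma nsum_exchange k l (f : nat -> nat -> R) :
  nsum k (fun i => nsum l (fun j => f i j)) = nsum l (fun j => nsum k (fun i => f i j)).
Proof. revert l; induction k; simpl; intros l.
  - symmetry; apply nsum_zero.
  - rewrite IHk, <- nsum_plus. reflexivity. Qed.

Lemma nsum_cv k (f : nat -> nat -> R) g : (forall i, (i < k)%nat -> Un_cv (fun m => f m i) (g i)) ->
  Un_cv (fun m => nsum k (f m)) (nsum k g).
Proof. induction k; simpl; intros H. apply cv_const. apply CV_plus; auto. Qed.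

Lemma vcv_sub n (u v : nat -> vec n) x y : vcv u x -> vcv v y -> vcv (fun k => vsub (u k) (v k)) (vsub x y).
Proof. intros H1 H2 i. apply CV_minus; auto. Qed.

Lemma vcv_const n (x : vec n) : vcv (fun _ => x) x.
Proof. intros i; apply cv_const. Qed.



Lemma dot_sub_sub n (g a b x : vec n) : dot g (vsub a x) - dot g (vsub b x) = dot g (vsub a b).
Proof. unfold dot, vsub. replace (fsum n (fun i => g i * (a i - x i)) - fsum n (fun i => g i * (b i - x i)))
  with (fsum n (fun i => g i * (a i - x i)) + (-1) * fsum n (fun i => g i * (b i - x i))) by ring.
  rewrite <- fsum_scal, <- fsum_plus. apply fsum_ext; intros; ring. Qed.

Lemma dot_mono_split n (g h a b : vec n) : dot (vsub g h) (vsub a b) = dot g (vsub a b) + dot h (vsub b a).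
Proof. unfold dot, vsub. rewrite <- fsum_plus. apply fsum_ext; intros; ring. Qed.

Definition m0 (u : R) := (u - Rabs u) / 2.

Lemma m0_nonpos u : m0 u <= 0.
Proof. unfold m0. pose proof (Rle_abs u). lra. Qed.

Lemma m0_mul u : m0 u * u = m0 u * m0 u.
Proof. unfold m0. destruct (Rle_or_lt 0 u). rewrite Rabs_pos_eq by lra. lra. rewrite Rabs_left by lra. lra. Qed.

Lemma m0_zero u : m0 u * m0 u <= 0 -> 0 <= u.
Proof. unfold m0. destruct (Rle_or_lt 0 u); auto. rewrite Rabs_left by lra. intros. nra. Qed.

Lemma m0_ineq a v : m0 (a + v) * m0 (a + v) <= m0 a * m0 a + 2 * m0 a * v + v * v.
Proof. unfold m0. destruct (Rle_or_lt 0 a); destruct (Rle_or_lt 0 (a + v));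
  repeat first [rewrite (Rabs_pos_eq a) by lra | rewrite (Rabs_left a) by lra
               | rewrite (Rabs_pos_eq (a+v)) by lra | rewrite (Rabs_left (a+v)) by lra]; nra. Qed.

Lemma m0_cv (u : nat -> R) l : Un_cv u l -> Un_cv (fun k => m0 (u k) * m0 (u k)) (m0 l * m0 l).
Proof. intros H. assert (Un_cv (fun k => m0 (u k)) (m0 l)).
  { unfold m0. apply (CV_mult (fun k => u k - Rabs (u k)) (fun _ => / 2)). apply CV_minus; auto. apply cv_cvabs; auto. apply cv_const. }
  apply CV_mult; auto. Qed.

Lemma cv_le_ev (u : nat -> R) l c : Un_cv u l -> (forall e, 0 < e -> exists N, forall k, (k >= N)%nat -> u k < c + e) -> l <= c.
Proof. intros H Hc. destruct (Rle_or_lt l c); auto. destruct (Hc ((l - c)/2)) as [N HN]; [lra|].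
  destruct (H ((l - c)/2)) as [M HM]; [lra|]. specialize (HN (max N M)); specialize (HM (max N M)).
  assert (u (max N M) < c + (l - c)/2) by (apply HN; lia). assert (R_dist (u (max N M)) l < (l-c)/2) by (apply HM; lia).
  unfold R_dist in *. pose proof (Rle_abs (l - u (max N M))). rewrite Rabs_minus_sym in H2. lra. Qed.

Lemma argmin n (C : vec n -> Prop) (h : vec n -> R) R0 : vclosed C -> (exists x, C x) ->
  (forall x, C x -> vnorm x <= R0) -> (forall x, C x -> 0 <= h x) ->
  (forall u x, (forall k, C (u k)) -> C x -> vcv u x -> Un_cv (fun k => h (u k)) (h x)) ->
  exists x, C x /\ forall z, C z -> h x <= h z.
Proof. intros Hcl [x0 Hx0] Hb Hpos Hcont.
  set (E := fun r => exists x, C x /\ r = - h x).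
  destruct (completeness E) as [m [Hm1 Hm2]].
  { exists 0. intros r [x [Hx ->]]. specialize (Hpos x Hx). lra. }
  { exists (- h x0). exists x0; auto. }
  assert (Hex : forall k, exists x, C x /\ - h x > m - / INR (S k)).
  { intros k. apply NNPP; intro Hn. assert (0 < / INR (S k)) by (apply Rinv_0_lt_compat, lt_0_INR; lia).
    assert (m <= m - / INR (S k)). apply Hm2. intros r [x [Hx ->]]. apply Rnot_lt_le. intro Hc.
    apply Hn. exists x; split; auto. lra. }
  pose (u k := proj1_sig (constructive_indefinite_description _ (Hex k))).
  assert (Hu : forall k, C (u k) /\ - h (u k) > m - / INR (S k)).
  { intros; unfold u; destruct constructive_indefinite_description; auto. }
  destruct (BW_bounded n u R0) as [phi [x [Hphi Hx]]]. { intros k; apply Hb, Hu. }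
  assert (Cx : C x) by (apply (closed_seq n C (fun k => u (phi k))); auto; intros; apply Hu).
  exists x; split; auto.
  assert (h x <= - m).
  { apply (cv_le_ev (fun k => h (u (phi k)))). apply Hcont; auto. intros; apply Hu.
    intros e He. destruct (inv_small e He) as [N HN]. exists N. intros k Hk.
    destruct (Hu (phi k)) as [_ H1]. pose proof (HN (phi k)). assert (phi k >= N)%nat by (pose proof (incr_ge phi Hphi k); lia).
    specialize (H H0). lra. }
  intros z Hz. assert (- h z <= m) by (apply Hm1; exists z; auto). lra. Qed.

Lemma finite_minty n (K C : vec n -> Prop) (G : vec n -> vec n) R0
  (HCK : forall x, C x -> K x) (Hmon : monotone_on K G) (Hcl : vclosed C) (Hcv : vconvex C)
  (Hne : exists x, C x) (Hb : forall x, C x -> vnorm x <= R0)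
  k (y : nat -> vec n) : (forall i, (i < k)%nat -> C (y i)) ->
  exists x, C x /\ forall i, (i < k)%nat -> 0 <= dot (G (y i)) (vsub (y i) x).
Proof. intros Hy.
  set (a := fun x i => dot (G (y i)) (vsub (y i) x)).
  set (h := fun x => nsum k (fun i => m0 (a x i) * m0 (a x i))).
  destruct (argmin n C h R0) as [xs [Hxs Hmin]]; auto.
  { intros x _. apply nsum_nonneg. intros; nra. }
  { intros u x Hu Hx Hc. apply nsum_cv. intros i _. apply (m0_cv (fun m => a (u m) i)).
    apply dot_cv. apply vcv_const. apply vcv_sub; auto. apply vcv_const. }
  exists xs; split; auto.
  set (mu := fun i => - m0 (a xs i)).
  assert (Hmu : forall i, 0 <= mu i) by (intros; unfold mu; pose proof (m0_nonpos (a xs i)); lra).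
  (* first order condition *)
  assert (FO : forall z, C z -> 0 <= nsum k (fun i => mu i * dot (G (y i)) (vsub z xs))).
  { intros z Hz. set (b := fun i => dot (G (y i)) (vsub z xs)).
    assert (Ht : forall t, 0 < t <= 1 -> 0 <= -2 * t * nsum k (fun i => m0 (a xs i) * b i) + t * t * nsum k (fun i => b i * b i)).
    { intros t Ht. set (xt := fun i => t * z i + (1 - t) * xs i).
      assert (Cxt : C xt) by (apply Hcv; auto; lra).
      assert (Hle := Hmin xt Cxt).
      assert (Hat : forall i, a xt i = a xs i + (- t * b i)).
      { intros i. unfold a, b. rewrite <- (dot_sub_sub n _ _ xt xs).
        assert (dot (G (y i)) (vsub xt xs) = t * dot (G (y i)) (vsub z xs)).
        { unfold dot, vsub, xt. rewrite <- fsum_scal. apply fsum_ext; intros; ring. }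
        rewrite <- (dot_sub_sub n _ (y i) xs xs) in *. 
        assert (dot (G (y i)) (vsub (y i) xt) = dot (G (y i)) (vsub (y i) xs) - dot (G (y i)) (vsub xt xs)).
        { rewrite dot_sub_sub. unfold dot, vsub. apply fsum_ext; intros; ring. }
        unfold dot, vsub in *. lra. }
      assert (h xt <= nsum k (fun i => m0 (a xs i) * m0 (a xs i) + 2 * m0 (a xs i) * (- t * b i) + (- t * b i) * (- t * b i))).
      { unfold h. apply nsum_le. intros i _. rewrite Hat. apply m0_ineq. }
      unfold h in H, Hle. rewrite !nsum_plus in H.
      replace (nsum k (fun i => 2 * m0 (a xs i) * (- t * b i))) with (-2 * t * nsum k (fun i => m0 (a xs i) * b i)) in H
        by (rewrite <- nsum_scal; apply nsum_ext; intros; ring).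
      replace (nsum k (fun i => - t * b i * (- t * b i))) with (t * t * nsum k (fun i => b i * b i)) in H
        by (rewrite <- nsum_scal; apply nsum_ext; intros; ring).
      lra. }
    set (P := nsum k (fun i => m0 (a xs i) * b i)). set (Q := nsum k (fun i => b i * b i)).
    fold P Q in Ht. assert (0 <= Q) by (apply nsum_nonneg; intros; nra).
    assert (P <= 0).
    { destruct (Rle_or_lt P 0); auto. set (t := Rmin 1 (P / (Q + 1))).
      assert (0 < P / (Q+1)) by (apply Rdiv_lt_0_compat; lra).
      assert (0 < t <= 1) by (unfold t; unfold Rmin; destruct Rle_dec; lra).
      specialize (Ht t H2). assert (t <= P / (Q+1)) by apply Rmin_r.
      assert (t * (Q + 1) <= P) by (apply Rmult_le_reg_r with (/(Q+1)); [apply Rinv_0_lt_compat; lra|];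
        rewrite Rmult_assoc, Rinv_r, Rmult_1_r by lra; auto).
      nra. }
    replace (nsum k (fun i => mu i * dot (G (y i)) (vsub z xs))) with (- P) by
      (unfold P, mu, b; rewrite <- nsum_opp; apply nsum_ext; intros; ring).
    lra. }
  assert (Hsq : forall i, (i < k)%nat -> 0 <= m0 (a xs i) * m0 (a xs i) -> True) by auto.
  destruct (Rle_or_lt (nsum k (fun i => mu i * mu i)) 0) as [Hz | Hp].
  - intros i Hi. change (0 <= a xs i). apply m0_zero.
    assert (Hmi : mu i * mu i <= nsum k (fun i => mu i * mu i)).
    { clear -Hi. induction k; simpl; [lia|]. destruct (Nat.eq_dec i k). subst.
      assert (0 <= nsum k (fun i => mu i * mu i)) by (apply nsum_nonneg; intros; nra). lra.
      assert (mu i * mu i <= nsum k (fun i => mu i * mu i)) by (apply IHk; lia). nra. }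
    unfold mu in Hmi, Hz. nra.
  - exfalso.
    assert (Hj : exists j, (j < k)%nat /\ 0 < mu j).
    { apply NNPP; intro Hn. assert (nsum k (fun i => mu i * mu i) <= 0).
      { rewrite <- (nsum_zero k). apply nsum_le. intros i Hi. assert (mu i <= 0).
        { apply Rnot_lt_le. intro. apply Hn. exists i; auto. } specialize (Hmu i). nra. } lra. }
    destruct Hj as [j0 [Hj1 Hj2]].
    set (S := nsum k mu). assert (HS : 0 < S) by (apply (nsum_pos k mu j0); auto).
    set (B := nsum k (fun i => mu i * a xs i)).
    assert (HB : B = - nsum k (fun i => mu i * mu i)).
    { unfold B. rewrite <- nsum_opp.
      apply nsum_ext; intros. unfold mu. pose proof (m0_mul (a xs i)). nra. }
    set (A := nsum k (fun j => mu j * nsum k (fun i => mu i * dot (G (y i)) (vsub (y j) xs)))).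
    assert (HA : 0 <= A) by (apply nsum_nonneg; intros; apply Rmult_le_pos; auto; apply FO; auto).
    set (T := nsum k (fun j => nsum k (fun i => mu j * mu i * dot (G (y i)) (vsub (y i) (y j))))).
    assert (HAT : A - S * B = - T).
    { assert (SB: S*B = nsum k (fun j => mu j * nsum k (fun i => mu i * a xs i))).
      { unfold S, B. rewrite Rmult_comm, <- nsum_scal. apply nsum_ext; intros; ring. }
      rewrite SB. unfold A, T. rewrite <- nsum_minus, <- nsum_opp. apply nsum_ext; intros j Hj.
      rewrite <- Rmult_minus_distr_l, <- nsum_minus, <- nsum_opp, <- nsum_scal.
      apply nsum_ext; intros i Hi. unfold a.
      rewrite <- (dot_sub_sub n (G (y i)) (y i) (y j) xs). ring. }
    assert (HT : 0 <= T).
    { assert (2 * T = nsum k (fun j => nsum k (fun i => mu j * mu i * dot (vsub (G (y i)) (G (y j))) (vsub (y i) (y j))))).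
      { assert (T2: T = nsum k (fun j => nsum k (fun i => mu i * mu j * dot (G (y j)) (vsub (y j) (y i))))).
        { unfold T. rewrite nsum_exchange. reflexivity. }
        assert (E: T + nsum k (fun j => nsum k (fun i => mu i * mu j * dot (G (y j)) (vsub (y j) (y i))))
           = nsum k (fun j => nsum k (fun i => mu j * mu i * dot (vsub (G (y i)) (G (y j))) (vsub (y i) (y j))))).
        { unfold T. rewrite <- nsum_plus. apply nsum_ext; intros j Hj.
          rewrite <- nsum_plus. apply nsum_ext; intros i Hi. rewrite dot_mono_split. ring. }
        lra. }
      assert (0 <= nsum k (fun j => nsum k (fun i => mu j * mu i * dot (vsub (G (y i)) (G (y j))) (vsub (y i) (y j))))).
      { apply nsum_nonneg; intros j Hj; apply nsum_nonneg; intros i Hi. apply Rmult_le_pos. apply Rmult_le_pos; auto.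
        apply Hmon; apply HCK; apply Hy; auto. }
      lra. }
    assert (S * B < 0) by (rewrite HB; nra). lra. Qed.

Lemma net n (C : vec n -> Prop) R0 e : (forall x, C x -> vnorm x <= R0) -> 0 < e ->
  exists k (y : nat -> vec n), (forall i, (i < k)%nat -> C (y i)) /\
    forall z, C z -> exists i, (i < k)%nat /\ vdist z (y i) < e.
Proof. intros Hb He. apply NNPP; intro Hn.
  assert (Hnext : forall (p : nat * (nat -> vec n)), exists z, (forall i, (i < fst p)%nat -> C (snd p i)) ->
     C z /\ forall i, (i < fst p)%nat -> e <= vdist z (snd p i)).
  { intros [k y]. simpl. destruct (classic (forall i, (i < k)%nat -> C (y i))) as [Hy|Hy].
    - apply NNPP; intro Hz. apply Hn. exists k, y. split; auto. intros z Cz. apply NNPP; intro Hz2.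
      apply Hz. exists z. intros _. split; auto. intros i Hi. apply Rnot_lt_le. intro Hlt. apply Hz2. exists i; auto.
    - exists (fun _ => 0). intros H; contradiction. }
  pose (next k y := proj1_sig (constructive_indefinite_description _ (Hnext (k, y)))).
  assert (Hnx : forall k y, (forall i, (i < k)%nat -> C (y i)) -> C (next k y) /\ forall i, (i < k)%nat -> e <= vdist (next k y) (y i)).
  { intros k y. unfold next. destruct constructive_indefinite_description as [z Hz]. simpl. apply Hz. }
  pose (build := fix build j := match j with O => fun _ => (fun _ => 0) : vec n
     | S j' => fun i => if Nat.eqb i j' then next j' (build j') else build j' i end).
  pose (s i := build (S i) i).
  assert (Hbs : forall j i, (i < j)%nat -> build j i = s i).
  { induction j; intros i Hi; [lia|]. simpl. destruct (Nat.eqb_spec i j). subst. unfold s. simpl. rewrite Nat.eqb_refl. auto.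
    apply IHj; lia. }
  assert (Hs1 : forall j, s j = next j (build j)). { intros j. unfold s. simpl. rewrite Nat.eqb_refl. auto. }
  assert (HC : forall j, forall j', (j' <= j)%nat -> C (s j')).
  { induction j; intros j' Hj'.
    - assert (j' = O) by lia. subst. rewrite Hs1. apply Hnx. intros; lia.
    - destruct (Nat.eq_dec j' (S j)). subst. rewrite Hs1. apply Hnx. intros i Hi. rewrite Hbs by auto. apply IHj; lia.
      apply IHj; lia. }
  assert (HD : forall j i, (i < j)%nat -> e <= vdist (s j) (s i)).
  { intros j i Hi. rewrite Hs1. rewrite <- (Hbs j i Hi). apply Hnx; auto. intros i' Hi'. rewrite Hbs by auto. apply (HC j); lia. }
  destruct (BW_bounded n s R0) as [phi [x [Hphi Hx]]]. { intros k; apply Hb. apply (HC k); lia. }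
  destruct (coords_small_vdist n e He) as [eta [Heta Hsm]].
  destruct (fin_uniform n (fun i a => Rabs (s (phi a) i - x i) < eta / 2)) as [N HN].
  { intros i. destruct (Hx i (eta/2)) as [N HN]; [lra|]. exists N. intros a Ha. apply HN; auto. }
  assert (vdist (s (phi (S N))) (s (phi N)) < e).
  { apply Hsm. intros i. pose proof (HN (S N) ltac:(lia) i). pose proof (HN N ltac:(lia) i).
    pose proof (Rabs_triang (s (phi (S N)) i - x i) (x i - s (phi N) i)).
    rewrite Rabs_minus_sym in H0. replace (s (phi (S N)) i - x i + (x i - s (phi N) i)) with (s (phi (S N)) i - s (phi N) i) in H1 by ring.
    lra. }
  pose proof (HD (phi (S N)) (phi N) (Hphi N)). lra. Qed.

Lemma minty_exists n (K C : vec n -> Prop) (G : vec n -> vec n) R0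
  (HCK : forall x, C x -> K x) (Hmon : monotone_on K G) (Hcont : vcontinuous_on K G)
  (Hcl : vclosed C) (Hcv : vconvex C)
  (Hne : exists x, C x) (Hb : forall x, C x -> vnorm x <= R0) :
  exists x, C x /\ forall y, C y -> 0 <= dot (G y) (vsub y x).
Proof.
  assert (Hm : forall m, exists t : nat * (nat -> vec n) * vec n,
    (forall i, (i < fst (fst t))%nat -> C (snd (fst t) i)) /\
    (forall z, C z -> exists i, (i < fst (fst t))%nat /\ vdist z (snd (fst t) i) < / INR (S m)) /\
    C (snd t) /\ forall i, (i < fst (fst t))%nat -> 0 <= dot (G (snd (fst t) i)) (vsub (snd (fst t) i) (snd t))).
  { intros m. destruct (net n C R0 (/ INR (S m)) Hb) as [k [y [Hy1 Hy2]]].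
    apply Rinv_0_lt_compat, lt_0_INR; lia.
    destruct (finite_minty n K C G R0 HCK Hmon Hcl Hcv Hne Hb k y Hy1) as [x [Hx1 Hx2]].
    exists (k, y, x); simpl; auto. }
  pose (tt m := proj1_sig (constructive_indefinite_description _ (Hm m))).
  assert (Htt : forall m, let t := tt m in
    (forall i, (i < fst (fst t))%nat -> C (snd (fst t) i)) /\
    (forall z, C z -> exists i, (i < fst (fst t))%nat /\ vdist z (snd (fst t) i) < / INR (S m)) /\
    C (snd t) /\ forall i, (i < fst (fst t))%nat -> 0 <= dot (G (snd (fst t) i)) (vsub (snd (fst t) i) (snd t))).
  { intros m. unfold tt. destruct constructive_indefinite_description. simpl. auto. }
  destruct (BW_bounded n (fun m => snd (tt m)) R0) as [phi [x [Hphi Hx]]]. { intros; apply Hb, Htt. }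
  assert (Cx : C x) by (apply (closed_seq n C (fun k => snd (tt (phi k)))); auto; intros; apply Htt).
  exists x; split; auto. intros y Cy.
  assert (Hw : forall m, exists i, (i < fst (fst (tt m)))%nat /\ vdist y (snd (fst (tt m)) i) < / INR (S m)).
  { intros m. apply Htt; auto. }
  pose (im m := proj1_sig (constructive_indefinite_description _ (Hw m))).
  assert (Him : forall m, (im m < fst (fst (tt m)))%nat /\ vdist y (snd (fst (tt m)) (im m)) < / INR (S m)).
  { intros m. unfold im. destruct constructive_indefinite_description. simpl. auto. }
  pose (w m := snd (fst (tt m)) (im m)).
  assert (Cw : forall m, C (w m)). { intros m. apply Htt, Him. }
  assert (Hwc : vcv w y).
  { apply vdist_vcv. intros e He. destruct (inv_small e He) as [N HN]. exists N. intros k Hk.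
    rewrite vdist_sym. pose proof (Him k) as [_ H]. specialize (HN k Hk). unfold w. lra. }
  apply (cv_ge (fun m => dot (G (w (phi m))) (vsub (w (phi m)) (snd (tt (phi m)))))).
  - apply dot_cv. apply (cont_seq n K G (fun m => w (phi m)) y Hcont (HCK y Cy)). intros; apply HCK; auto.
    apply vcv_subseq; auto. apply vcv_sub; auto. apply vcv_subseq; auto.
  - intros m. apply Htt. apply Him. Qed.

Lemma minty_stamp n (K C : vec n -> Prop) (G : vec n -> vec n)
  (HCK : forall x, C x -> K x) (Hcont : vcontinuous_on K G) (Hcv : vconvex C) x :
  C x -> (forall y, C y -> 0 <= dot (G y) (vsub y x)) -> forall y, C y -> 0 <= dot (G x) (vsub y x).
Proof. intros Cx Hm y Cy.
  pose (t m := / INR (S m)).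
  assert (Ht : forall m, 0 < t m <= 1).
  { intros m. unfold t. split. apply Rinv_0_lt_compat, lt_0_INR; lia.
    rewrite <- Rinv_1. apply Rinv_le_contravar. lra. rewrite S_INR. pose proof (pos_INR m). lra. }
  pose (z m := fun i => t m * y i + (1 - t m) * x i).
  assert (Cz : forall m, C (z m)) by (intros; apply Hcv; auto; specialize (Ht m); lra).
  assert (Hz : forall m, 0 <= dot (G (z m)) (vsub y x)).
  { intros m. specialize (Hm (z m) (Cz m)).
    assert (dot (G (z m)) (vsub (z m) x) = t m * dot (G (z m)) (vsub y x)).
    { unfold dot, vsub, z. rewrite <- fsum_scal. apply fsum_ext; intros; ring. }
    specialize (Ht m). nra. }
  assert (Htc : Un_cv t 0).
  { intros e He. destruct (inv_small e He) as [N HN]. exists N. intros k Hk. unfold R_dist, t.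
    rewrite Rminus_0_r, Rabs_pos_eq. auto. left; apply Ht. }
  assert (Hzc : vcv z x).
  { intros i. pose proof (CV_plus _ _ _ _ (CV_mult _ _ _ _ Htc (cv_const (y i))) (CV_mult _ _ _ _ (CV_minus _ _ _ _ (cv_const 1) Htc) (cv_const (x i)))) as Hc.
    replace (0 * y i + (1 - 0) * x i) with (x i) in Hc by ring. exact Hc. }
  apply (cv_ge (fun m => dot (G (z m)) (vsub y x))); auto.
  apply dot_cv. apply (cont_seq n K G); auto. apply vcv_const. Qed.

Lemma dot_vsub_swap n (g a b : vec n) : dot g (vsub a b) = - dot g (vsub b a).
Proof. unfold dot, vsub. replace (- fsum n (fun i => g i * (b i - a i))) with (-1 * fsum n (fun i => g i * (b i - a i))) by ring.
  rewrite <- fsum_scal. apply fsum_ext; intros; ring. Qed.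

Lemma stamp_minty n (K C : vec n -> Prop) (G : vec n -> vec n)
  (HCK : forall x, C x -> K x) (Hmon : monotone_on K G) x :
  C x -> (forall y, C y -> 0 <= dot (G x) (vsub y x)) -> forall y, C y -> 0 <= dot (G y) (vsub y x).
Proof. intros Cx H y Cy. specialize (H y Cy). pose proof (Hmon x y (HCK x Cx) (HCK y Cy)).
  rewrite dot_mono_split, (dot_vsub_swap n (G x) x y) in H0. lra. Qed.

Lemma stamp_exists n (K C : vec n -> Prop) (G : vec n -> vec n) R0
  (HCK : forall x, C x -> K x) (Hmon : monotone_on K G) (Hcont : vcontinuous_on K G)
  (Hcl : vclosed C) (Hcv : vconvex C)
  (Hne : exists x, C x) (Hb : forall x, C x -> vnorm x <= R0) :
  exists x, Sol G C x.
Proof. destruct (minty_exists n K C G R0 HCK Hmon Hcont Hcl Hcv Hne Hb) as [x [Cx Hx]].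
  exists x. split; auto. apply (minty_stamp n K C G HCK Hcont Hcv x Cx Hx). Qed.

Lemma fsum_minus n (f g : Fin.t n -> R) : fsum n (fun i => f i - g i) = fsum n f - fsum n g.
Proof. replace (fsum n f - fsum n g) with (fsum n f + -1 * fsum n g) by ring.
  rewrite <- fsum_scal, <- fsum_plus. apply fsum_ext; intros; ring. Qed.

Lemma fsum_scal_r n c (f : Fin.t n -> R) : fsum n (fun i => f i * c) = fsum n f * c.
Proof. rewrite Rmult_comm, <- fsum_scal. apply fsum_ext; intros; ring. Qed.

Lemma fsum_pos n (f : Fin.t n -> R) j : (forall i, 0 <= f i) -> 0 < f j -> 0 < fsum n f.
Proof. intros H Hj. pose proof (fsum_ge_term n f j H). lra. Qed.

Lemma cauchy_schwarz n (x y : vec n) : dot x y * dot x y <= dot x x * dot y y.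
Proof. set (a := dot x x). set (b := dot x y). set (c := dot y y).
  assert (Hq : forall t, 0 <= a + 2 * t * b + t * t * c).
  { intros t. pose proof (dot_sq_nonneg n (fun i => x i + t * y i)).
    replace (dot (fun i => x i + t * y i) (fun i => x i + t * y i)) with (a + 2 * t * b + t * t * c) in H; auto.
    unfold a, b, c, dot. rewrite <- !fsum_scal, <- !fsum_plus. apply fsum_ext; intros; ring. }
  assert (0 <= c) by apply dot_sq_nonneg. assert (0 <= a) by apply dot_sq_nonneg.
  destruct (Req_dec c 0) as [Hc|Hc].
  - rewrite Hc in *. destruct (Req_dec b 0) as [Hb|Hb]. rewrite Hb; nra.
    specialize (Hq (- (a + 1) / (2 * b))).
    replace (a + 2 * (- (a + 1) / (2 * b)) * b + - (a + 1) / (2 * b) * (- (a + 1) / (2 * b)) * 0) with (-1) in Hq by (field; auto). lra.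
  - specialize (Hq (- b / c)). assert (0 < c) by lra.
    assert (Hm : 0 <= (a + 2 * (- b / c) * b + - b / c * (- b / c) * c) * c) by nra.
    replace ((a + 2 * (- b / c) * b + - b / c * (- b / c) * c) * c) with (a * c - b * b) in Hm by (field; auto). nra. Qed.

Lemma vnorm_ext n (x y : vec n) : (forall i, x i = y i) -> vnorm x = vnorm y.
Proof. intros H. unfold vnorm. f_equal. apply dot_ext; auto. Qed.

Lemma vnorm_triangle n (x y : vec n) : vnorm (fun i => x i + y i) <= vnorm x + vnorm y.
Proof. apply vnorm_le. pose proof (vnorm_nonneg n x); pose proof (vnorm_nonneg n y); lra.
  assert (dot (fun i => x i + y i) (fun i => x i + y i) = dot x x + 2 * dot x y + dot y y).
  { unfold dot. rewrite <- fsum_scal, <- !fsum_plus. apply fsum_ext; intros; ring. }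
  rewrite H. pose proof (cauchy_schwarz n x y). rewrite <- (vnorm_sq n x), <- (vnorm_sq n y) in *.
  pose proof (vnorm_nonneg n x); pose proof (vnorm_nonneg n y).
  assert (dot x y <= vnorm x * vnorm y).
  { destruct (Rle_or_lt (dot x y) (vnorm x * vnorm y)) as [|Hl]; auto. exfalso.
    assert (0 <= vnorm x * vnorm y) by nra.
    assert (vnorm x * vnorm y * (vnorm x * vnorm y) < dot x y * dot x y).
    { apply Rle_lt_trans with (vnorm x * vnorm y * dot x y). apply Rmult_le_compat_l; lra.
      apply Rmult_lt_compat_r; lra. }
    nra. }
  nra. Qed.

Lemma vnorm_scal n c (x : vec n) : vnorm (fun i => c * x i) = Rabs c * vnorm x.
Proof. unfold vnorm. rewrite <- (sqrt_square (Rabs c)) by apply Rabs_pos. rewrite <- sqrt_mult.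
  f_equal. unfold dot. rewrite <- fsum_scal. apply fsum_ext; intros. rewrite <- Rabs_mult, Rabs_pos_eq by nra. ring.
  pose proof (Rabs_pos c); nra. apply dot_sq_nonneg. Qed.

Lemma vnorm_diff n (x y : vec n) : vnorm x <= vnorm y + vdist x y.
Proof. unfold vdist. rewrite (vnorm_ext n x (fun i => y i + vsub x y i)). apply vnorm_triangle.
  intros; unfold vsub; ring. Qed.

Lemma vdist_self n (x : vec n) : vdist x x = 0.
Proof. unfold vdist, vnorm, dot, vsub. rewrite (fsum_ext n _ (fun _ => 0)). rewrite fsum_zero. apply sqrt_0.
  intros; ring. Qed.

Lemma vnorm_convex n (x y : vec n) t : 0 <= t <= 1 ->
  vnorm (fun i => t * x i + (1 - t) * y i) <= t * vnorm x + (1 - t) * vnorm y.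
Proof. intros Ht. eapply Rle_trans. apply (vnorm_triangle n (fun i => t * x i) (fun i => (1 - t) * y i)).
  rewrite !vnorm_scal, !Rabs_pos_eq by lra. lra. Qed.

Lemma vdist_eq0 n (x y : vec n) : (forall i, x i = y i) -> vdist x y = 0.
Proof. intros H. unfold vdist, vnorm, dot, vsub. rewrite (fsum_ext n _ (fun _ => 0)). rewrite fsum_zero. apply sqrt_0.
  intros; rewrite H; ring. Qed.

Definition ropen (P : R -> Prop) := forall t, 0 <= t <= 1 -> P t ->
  exists d, 0 < d /\ forall s, 0 <= s <= 1 -> Rabs (s - t) < d -> P s.

Lemma interval_conn (P Q : R -> Prop) : (forall t, 0 <= t <= 1 -> P t \/ Q t) ->
  (forall t, 0 <= t <= 1 -> P t -> Q t -> False) -> ropen P -> ropen Q -> P 0 -> Q 1 -> False.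
Proof. intros H1 H2 HP HQ P0 Q1.
  set (E := fun t => 0 <= t <= 1 /\ forall s, 0 <= s <= t -> P s).
  destruct (completeness E) as [T [HT1 HT2]].
  { exists 1. intros t [Ht _]; lra. }
  { exists 0. split. lra. intros s Hs. replace s with 0 by lra. auto. }
  assert (E0 : E 0) by (split; [lra|]; intros s Hs; replace s with 0 by lra; auto).
  assert (T0 : 0 <= T) by (apply HT1; auto).
  assert (T1 : T <= 1) by (apply HT2; intros t [Ht _]; lra).
  assert (Hb : forall s, 0 <= s < T -> P s).
  { intros s Hs. apply NNPP; intro Hn. assert (T <= s). apply HT2. intros t [Ht Ht2].
    apply Rnot_lt_le; intro. apply Hn. apply Ht2; lra. lra. }
  destruct (H1 T (conj T0 T1)) as [PT|QT].
  - destruct (Req_dec T 1) as [E1|E1]. { subst. apply (H2 1); auto; lra. }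
    destruct (HP T (conj T0 T1) PT) as [d [Hd Hd2]].
    set (t' := Rmin 1 (T + d/2)).
    assert (E t').
    { split. unfold t', Rmin; destruct Rle_dec; lra. intros s Hs.
      destruct (Rlt_or_le s T). apply Hb; lra. apply Hd2. unfold t', Rmin in Hs; destruct Rle_dec in Hs; lra.
      unfold t', Rmin in Hs; destruct Rle_dec in Hs; rewrite Rabs_pos_eq; lra. }
    specialize (HT1 t' H). unfold t', Rmin in HT1; destruct Rle_dec in HT1; lra.
  - destruct (Req_dec T 0) as [E1|E1]. { subst. apply (H2 0); auto; lra. }
    destruct (HQ T (conj T0 T1) QT) as [d [Hd Hd2]].
    set (s := Rmax 0 (T - d/2)).
    assert (0 <= s < T) by (unfold s, Rmax; destruct Rle_dec; lra).
    apply (H2 s). lra. apply Hb; auto. apply Hd2. lra. rewrite Rabs_left; unfold s, Rmax in *; destruct Rle_dec; lra. Qed.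

Lemma convex_sep n (E U V : vec n -> Prop) : vconvex E -> vopen U -> vopen V ->
  (forall x, E x -> U x \/ V x) -> (forall x, E x -> U x -> V x -> False) ->
  forall a b, E a -> E b -> U a -> V b -> False.
Proof. intros HE HU HV Hc Hd a b Ea Eb Ua Vb.
  set (p := fun s => (fun i => s * b i + (1 - s) * a i) : vec n).
  assert (Hp : forall s s', vdist (p s) (p s') = Rabs (s - s') * vdist b a).
  { intros. unfold vdist. rewrite <- vnorm_scal. apply vnorm_ext; intros; unfold p, vsub; ring. }
  assert (Ho : forall W : vec n -> Prop, vopen W -> ropen (fun s => W (p s))).
  { intros W HW t Ht Wt. destruct (HW _ Wt) as [e [He He2]].
    exists (e / (vdist b a + 1)). pose proof (vnorm_nonneg n (vsub b a)). fold (vdist b a) in H.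
    split. apply Rdiv_lt_0_compat; lra. intros s Hs Hst. apply He2. rewrite Hp.
    rewrite Rabs_minus_sym. apply Rle_lt_trans with (Rabs (s - t) * (vdist b a + 1)). pose proof (Rabs_pos (s - t)); nra.
    apply Rmult_lt_reg_r with (/ (vdist b a + 1)). apply Rinv_0_lt_compat; lra.
    rewrite Rmult_assoc, Rinv_r, Rmult_1_r by lra. auto. }
  apply (interval_conn (fun s => U (p s)) (fun s => V (p s))).
  - intros t Ht. apply Hc. apply HE; auto; lra.
  - intros t Ht. apply Hd. apply HE; auto; lra.
  - apply Ho; auto.
  - apply Ho; auto.
  - destruct (HU a Ua) as [e [He He2]]. apply He2. rewrite vdist_eq0. auto. intros; unfold p; ring.
  - destruct (HV b Vb) as [e [He He2]]. apply He2. rewrite vdist_eq0. auto. intros; unfold p; ring.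
Qed.

Lemma convex_connected n (E : vec n -> Prop) : vconvex E -> vconnected E.
Proof. intros HE [U [V [HU [HV [Hc [[a [Ea Ua]] [[b [Eb Vb]] Hd]]]]]]]. exact (convex_sep n E U V HE HU HV Hc Hd a b Ea Eb Ua Vb). Qed.

Lemma union_connected n (A B : vec n -> Prop) : vconnected A -> vconnected B -> (exists x, A x /\ B x) ->
  vconnected (fun x => A x \/ B x).
Proof. intros HA HB [p [Ap Bp]] [U [V [HU [HV [Hc [[a [Ea Ua]] [[b [Eb Vb]] Hd]]]]]]].
  assert (NA : ~ ((exists x, A x /\ U x) /\ (exists x, A x /\ V x))).
  { intros [H1 H2]. apply HA. exists U, V. split; [auto|split; [auto|split; [intros; apply Hc; auto|split; [auto|split; [auto|intros x0 Hx0 Ux0 Vx0; apply (Hd x0); auto]]]]]. }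
  assert (NB : ~ ((exists x, B x /\ U x) /\ (exists x, B x /\ V x))).
  { intros [H1 H2]. apply HB. exists U, V. split; [auto|split; [auto|split; [intros; apply Hc; auto|split; [auto|split; [auto|intros x0 Hx0 Ux0 Vx0; apply (Hd x0); auto]]]]]. }
  destruct (Hc p (or_introl Ap)) as [Up|Vp].
  - destruct Eb as [Ab|Bb]. apply NA; split; eauto. apply NB; split; eauto.
  - destruct Ea as [Aa|Ba]. apply NA; split; eauto. apply NB; split; eauto. Qed.

Lemma comp_absorb n (W A D : vec n -> Prop) : conn_component W A -> vconnected D -> (forall x, D x -> W x) ->
  (exists x, D x /\ A x) -> forall x, D x -> A x.
Proof. intros [_ [HAW [HAc Hmax]]] HD HDW [p [Dp Ap]] x Dx.
  apply (Hmax (fun x => A x \/ D x)); auto. apply union_connected; auto. exists p; auto.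
  intros y [Ay|Dy]; auto. Qed.

Lemma Fcomb_dot m n (F : Fin.t m -> vec n -> vec n) xi x v :
  dot (Fcomb F xi x) v = fsum m (fun l => xi l * dot (F l x) v).
Proof. unfold dot, Fcomb.
  rewrite (fsum_ext n _ (fun i => fsum m (fun l => xi l * F l x i * v i))).
  2:{ intros; rewrite <- fsum_scal_r; apply fsum_ext; intros; ring. }
  rewrite fsum_exchange. apply fsum_ext; intros; rewrite <- fsum_scal; apply fsum_ext; intros; ring. Qed.

Lemma Fcomb_mon m n (K : vec n -> Prop) (F : Fin.t m -> vec n -> vec n) xi :
  (forall l, 0 <= xi l) -> (forall l, monotone_on K (F l)) -> monotone_on K (Fcomb F xi).
Proof. intros Hxi Hm x y Kx Ky.
  assert (dot (vsub (Fcomb F xi y) (Fcomb F xi x)) (vsub y x) = fsum m (fun l => xi l * dot (vsub (F l y) (F l x)) (vsub y x))).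
  { unfold dot, vsub, Fcomb.
    rewrite (fsum_ext n _ (fun i => fsum m (fun l => xi l * (F l y i - F l x i) * (y i - x i)))).
    2:{ intros; rewrite <- fsum_minus, <- fsum_scal_r; apply fsum_ext; intros; ring. }
    rewrite fsum_exchange. apply fsum_ext; intros; rewrite <- fsum_scal; apply fsum_ext; intros; ring. }
  rewrite H. apply fsum_nonneg. intros l. apply Rmult_le_pos; auto. apply Hm; auto. Qed.

Lemma seq_cont n (K : vec n -> Prop) (G : vec n -> vec n) :
  (forall u x, K x -> (forall k, K (u k)) -> vcv u x -> vcv (fun k => G (u k)) (G x)) -> vcontinuous_on K G.
Proof. intros H x Kx e He. apply NNPP; intro Hn.
  assert (Hy : forall k, exists y, K y /\ vdist x y < / INR (S k) /\ e <= vdist (G x) (G y)).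
  { intros k. apply NNPP; intro Hk. apply Hn. exists (/ INR (S k)). split. apply Rinv_0_lt_compat, lt_0_INR; lia.
    intros y Ky Hxy. apply Rnot_le_lt. intro. apply Hk. exists y; auto. }
  pose (u k := proj1_sig (constructive_indefinite_description _ (Hy k))).
  assert (Hu : forall k, K (u k) /\ vdist x (u k) < / INR (S k) /\ e <= vdist (G x) (G (u k))).
  { intros k; unfold u; destruct constructive_indefinite_description; auto. }
  assert (Hc : vcv u x).
  { apply vdist_vcv. intros e' He'. destruct (inv_small e' He') as [N HN]. exists N. intros k Hk.
    rewrite vdist_sym. destruct (Hu k) as [_ [H1 _]]. specialize (HN k Hk). lra. }
  destruct (vcv_vdist' n _ _ (H u x Kx (fun k => proj1 (Hu k)) Hc) e He) as [N HN].
  specialize (HN N (le_n _)). destruct (Hu N) as [_ [_ H3]]. lra. Qed.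

Lemma Fcomb_cv m n (K : vec n -> Prop) (F : Fin.t m -> vec n -> vec n) (xs : nat -> vec m) xi (zs : nat -> vec n) z :
  (forall l, vcontinuous_on K (F l)) -> vcv xs xi -> vcv zs z -> K z -> (forall k, K (zs k)) ->
  vcv (fun k => Fcomb F (xs k) (zs k)) (Fcomb F xi z).
Proof. intros Hc Hx Hz Kz Kzs i. unfold Fcomb.
  apply (fsum_cv m (fun k l => xs k l * F l (zs k) i)). intros l. apply CV_mult. apply Hx.
  apply (cont_seq n K (F l) zs z (Hc l) Kz Kzs Hz). Qed.

Lemma Fcomb_cont m n (K : vec n -> Prop) (F : Fin.t m -> vec n -> vec n) xi :
  (forall l, vcontinuous_on K (F l)) -> vcontinuous_on K (Fcomb F xi).
Proof. intros Hc. apply seq_cont. intros u x Kx Ku Hu. apply (Fcomb_cv m n K F (fun _ => xi)); auto. apply vcv_const. Qed.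

Lemma Sol_ext m n (K : vec n -> Prop) (F : Fin.t m -> vec n -> vec n) xi xi' x :
  (forall l, xi l = xi' l) -> Sol (Fcomb F xi) K x -> Sol (Fcomb F xi') K x.
Proof. intros H [Kx Hx]. split; auto. intros y Ky. specialize (Hx y Ky). rewrite Fcomb_dot in *.
  rewrite (fsum_ext m _ (fun l => xi l * dot (F l x) (vsub y x))); auto. intros; rewrite H; auto. Qed.

Lemma Sol_closed_graph m n (K C : vec n -> Prop) (F : Fin.t m -> vec n -> vec n) (xs : nat -> vec m) xi (zs : nat -> vec n) z :
  (forall l, vcontinuous_on K (F l)) -> vclosed C -> (forall x, C x -> K x) ->
  vcv xs xi -> vcv zs z -> (forall k, Sol (Fcomb F (xs k)) C (zs k)) -> Sol (Fcomb F xi) C z.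
Proof. intros Hc HC HCK Hx Hz Hs.
  assert (Cz : C z) by (apply (closed_seq n C zs); auto; intros; apply Hs).
  split; auto. intros y Cy. apply (cv_ge (fun k => dot (Fcomb F (xs k) (zs k)) (vsub y (zs k)))).
  apply dot_cv. apply (Fcomb_cv m n K); auto. intros; apply HCK, Hs. apply vcv_sub; auto. apply vcv_const.
  intros k; apply Hs; auto. Qed.

Definition ballK {n} (K : vec n -> Prop) R0 := fun x => K x /\ vnorm x <= R0.

Lemma ball_closed n (K : vec n -> Prop) R0 : vclosed K -> vclosed (ballK K R0).
Proof. intros HK x Hx. unfold ballK in Hx. destruct (classic (K x)) as [Kx|Kx].
  - assert (R0 < vnorm x) by (apply Rnot_le_lt; intro; apply Hx; auto).
    exists (vnorm x - R0). split. lra. intros y Hy [_ Hy2]. pose proof (vnorm_diff n x y). lra.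
  - destruct (HK x Kx) as [e [He H]]. exists e; split; auto. intros y Hy [Ky _]. apply (H y); auto. Qed.

Lemma ball_convex n (K : vec n -> Prop) R0 : vconvex K -> vconvex (ballK K R0).
Proof. intros HK x y t [Kx Hx] [Ky Hy] Ht. split. apply HK; auto.
  eapply Rle_trans. apply vnorm_convex; auto. nra. Qed.

Lemma local_global n (K : vec n -> Prop) (G : vec n -> vec n) R0 x : vconvex K ->
  Sol G (ballK K R0) x -> vnorm x < R0 -> Sol G K x.
Proof. intros HK [[Kx Hx] Hs] Hlt. split; auto. intros y Ky.
  set (s := Rmin 1 ((R0 - vnorm x) / (vnorm y + 1))).
  pose proof (vnorm_nonneg n y). pose proof (vnorm_nonneg n x).
  assert (Hs0 : 0 < (R0 - vnorm x) / (vnorm y + 1)) by (apply Rdiv_lt_0_compat; lra).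
  assert (Hs1 : 0 < s <= 1) by (unfold s, Rmin; destruct Rle_dec; lra).
  assert (Hs2 : s * (vnorm y + 1) <= R0 - vnorm x).
  { assert (s <= (R0 - vnorm x) / (vnorm y + 1)) by apply Rmin_r.
    apply Rmult_le_reg_r with (/ (vnorm y + 1)). apply Rinv_0_lt_compat; lra.
    rewrite Rmult_assoc, Rinv_r, Rmult_1_r by lra. auto. }
  set (z := fun i => s * y i + (1 - s) * x i).
  assert (Bz : ballK K R0 z).
  { split. apply HK; auto; lra. eapply Rle_trans. apply vnorm_convex; lra. nra. }
  specialize (Hs z Bz).
  assert (dot (G x) (vsub z x) = s * dot (G x) (vsub y x)).
  { unfold dot, vsub, z. rewrite <- fsum_scal. apply fsum_ext; intros; ring. }
  nra. Qed.

Lemma Sol_convex n (K C : vec n -> Prop) (G : vec n -> vec n) :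
  (forall x, C x -> K x) -> vconvex C -> monotone_on K G -> vcontinuous_on K G -> vconvex (Sol G C).
Proof. intros HCK HC Hm Hc x y t [Cx Hx] [Cy Hy] Ht.
  assert (Cz : C (fun i => t * x i + (1 - t) * y i)) by (apply HC; auto).
  split; auto. apply (minty_stamp n K C G HCK Hc HC); auto.
  intros w Cw. pose proof (stamp_minty n K C G HCK Hm x Cx Hx w Cw).
  pose proof (stamp_minty n K C G HCK Hm y Cy Hy w Cw).
  assert (dot (G w) (vsub w (fun i => t * x i + (1 - t) * y i)) = t * dot (G w) (vsub w x) + (1 - t) * dot (G w) (vsub w y)).
  { unfold dot, vsub. rewrite <- !fsum_scal, <- fsum_plus. apply fsum_ext; intros; ring. }
  nra. Qed.

Lemma main_gen m n (K : vec n -> Prop) (F : Fin.t m -> vec n -> vec n) (PD : vec m -> Prop) (W A : vec n -> Prop)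
  (hKcl : vclosed K) (hKcv : vconvex K)
  (hFc : forall l, vcontinuous_on K (F l)) (hFmon : forall l, monotone_on K (F l))
  (HPDc : vconvex PD) (HPDnn : forall xi l, PD xi -> 0 <= xi l)
  (HW : forall xi x, PD xi -> Sol (Fcomb F xi) K x -> W x)
  (HA : conn_component W A) (HAb : vbounded A)
  xi0 x0 (Hxi0 : PD xi0) (Hx0 : Sol (Fcomb F xi0) K x0) (Ax0 : A x0) :
  exists d, 0 < d /\ forall eta, PD eta -> vdist xi0 eta < d -> exists x, Sol (Fcomb F eta) K x /\ A x.
Proof.
  assert (Hmon : forall eta, PD eta -> monotone_on K (Fcomb F eta)).
  { intros eta Heta. apply Fcomb_mon; auto. }
  assert (Hcont : forall eta, vcontinuous_on K (Fcomb F eta)).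
  { intros eta. apply Fcomb_cont; auto. }
  assert (HKK : forall x, K x -> K x) by auto.
  assert (HS0 : forall x, Sol (Fcomb F xi0) K x -> A x).
  { apply (comp_absorb n W A); auto. apply convex_connected. apply Sol_convex with K; auto.
    intros; apply (HW xi0); auto. exists x0; auto. }
  destruct HAb as [r Hr]. assert (Hr0 : 0 <= r) by (pose proof (vnorm_nonneg n x0); pose proof (Hr x0 Ax0); lra).
  set (R := r + 1). set (C := ballK K R).
  assert (HCcl : vclosed C) by (apply ball_closed; auto).
  assert (HCcv : vconvex C) by (apply ball_convex; auto).
  assert (HCK : forall x, C x -> K x) by (intros x [Kx _]; auto).
  assert (HCb : forall x, C x -> vnorm x <= R) by (intros x [_ H]; auto).
  assert (Cx0 : C x0) by (split; [apply Hx0|]; pose proof (Hr x0 Ax0); unfold R; lra).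
  assert (Hne : exists x, C x) by (exists x0; auto).
  assert (L9 : forall xs, Sol (Fcomb F xi0) C xs -> vnorm xs < R).
  { intros xs Hxs. apply Rnot_le_lt. intro HRx.
    assert (Sx0 : Sol (Fcomb F xi0) C x0) by (split; auto; intros y Cy; apply Hx0; auto).
    set (t := (2 * r + / 2) / (2 * r + 1)).
    assert (Ht : t * (2 * r + 1) = 2 * r + / 2) by (unfold t; field; lra).
    assert (Htp : 0 < t) by (unfold t; apply Rdiv_lt_0_compat; lra).
    assert (Ht1 : t < 1).
    { destruct (Rlt_or_le t 1) as [|Hge]; auto. assert (1 * (2 * r + 1) <= t * (2 * r + 1)) by (apply Rmult_le_compat_r; lra). lra. }
    assert (Ht0 : 0 <= t <= 1) by lra.
    set (z := fun i => t * xs i + (1 - t) * x0 i).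
    assert (Sz : Sol (Fcomb F xi0) C z) by (apply (Sol_convex n K C); auto).
    assert (Hxsb := HCb xs (proj1 Hxs)). assert (Hx0b := Hr x0 Ax0).
    assert (Hz : vnorm z < R).
    { eapply Rle_lt_trans. apply vnorm_convex; auto. unfold R in *.
      assert (t * vnorm xs <= t * (r + 1)) by (apply Rmult_le_compat_l; lra).
      assert ((1 - t) * vnorm x0 <= (1 - t) * r) by (apply Rmult_le_compat_l; lra). lra. }
    assert (Az : A z) by (apply HS0; apply local_global with R; auto).
    specialize (Hr z Az).
    assert (vnorm (fun i => t * xs i) <= vnorm z + vnorm (fun i => (1 - t) * x0 i)).
    { rewrite (vnorm_ext n (fun i => t * xs i) (fun i => z i + (- (1 - t) * x0 i))).
      eapply Rle_trans. apply vnorm_triangle. rewrite !vnorm_scal. rewrite Rabs_Ropp. lra.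
      intros; unfold z; ring. }
    rewrite !vnorm_scal, !Rabs_pos_eq in H by lra. unfold R in *. nra. }
  assert (Step2 : exists d, 0 < d /\ forall eta, PD eta -> vdist xi0 eta < d -> forall x, Sol (Fcomb F eta) C x -> vnorm x < R).
  { apply NNPP; intro Hn.
    assert (Hk : forall k, exists p : vec m * vec n, PD (fst p) /\ vdist xi0 (fst p) < / INR (S k) /\
       Sol (Fcomb F (fst p)) C (snd p) /\ R <= vnorm (snd p)).
    { intros k. apply NNPP; intro Hk. apply Hn. exists (/ INR (S k)). split. apply Rinv_0_lt_compat, lt_0_INR; lia.
      intros eta Heta Hd x Hx. apply Rnot_le_lt; intro. apply Hk. exists (eta, x); simpl; auto. }
    pose (ps k := proj1_sig (constructive_indefinite_description _ (Hk k))).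
    assert (Hps : forall k, PD (fst (ps k)) /\ vdist xi0 (fst (ps k)) < / INR (S k) /\
       Sol (Fcomb F (fst (ps k))) C (snd (ps k)) /\ R <= vnorm (snd (ps k))).
    { intros k; unfold ps; destruct constructive_indefinite_description; auto. }
    destruct (BW_bounded n (fun k => snd (ps k)) R) as [phi [xs [Hphi Hxs]]].
    { intros k; apply HCb; apply Hps. }
    assert (Hec : vcv (fun k => fst (ps k)) xi0).
    { apply vdist_vcv. intros e He. destruct (inv_small e He) as [N HN]. exists N. intros k Hk'.
      rewrite vdist_sym. destruct (Hps k) as [_ [H1 _]]. specialize (HN k Hk'). lra. }
    assert (Sxs : Sol (Fcomb F xi0) C xs).
    { apply (Sol_closed_graph m n K C F (fun k => fst (ps (phi k))) xi0 (fun k => snd (ps (phi k))) xs hFc HCcl HCK (vcv_subseq m _ _ phi Hec Hphi) Hxs).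
      intros; apply Hps. }
    assert (R * R <= dot xs xs).
    { apply (cv_ge (fun k => dot (snd (ps (phi k))) (snd (ps (phi k))))). apply dot_cv; auto.
      intros k. destruct (Hps (phi k)) as [_ [_ [_ H]]]. rewrite <- vnorm_sq. unfold R in *. nra. }
    specialize (L9 xs Sxs). apply vnorm_lt_sq in L9. lra. }
  destruct Step2 as [d [Hd Hd2]].
  set (N := fun eta => PD eta /\ vdist xi0 eta < d).
  assert (Step3 : forall eta, N eta -> exists x, Sol (Fcomb F eta) K x /\ vnorm x <= R).
  { intros eta [Heta Hde]. destruct (stamp_exists n K C (Fcomb F eta) R HCK (Hmon eta Heta) (Hcont eta) HCcl HCcv Hne HCb) as [x Hx].
    exists x. assert (vnorm x < R) by (apply (Hd2 eta); auto). split. apply local_global with R; auto. lra. }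
  set (D := fun x => exists eta, N eta /\ Sol (Fcomb F eta) K x /\ vnorm x <= R).
  assert (HDW : forall x, D x -> W x) by (intros x [eta [[Heta _] [Hs _]]]; apply (HW eta); auto).
  assert (Dx0 : D x0).
  { exists xi0. split. split; auto. rewrite vdist_self; auto. split; auto. }
  assert (HDc : vconnected D).
  { intros [U [V [HU [HV [Hc [[a [Da Ua]] [[b [Db Vb]] Hdis]]]]]]].
    destruct Da as [al [Nal [Sa Ba]]]. destruct Db as [be [Nbe [Sb Bb]]].
    set (zeta := fun s => (fun l => s * be l + (1 - s) * al l) : vec m).
    assert (Nz : forall s, 0 <= s <= 1 -> N (zeta s)).
    { intros s Hs. destruct Nal as [P1 D1]. destruct Nbe as [P2 D2]. split. apply HPDc; auto.
      unfold vdist. rewrite (vnorm_ext m _ (fun l => s * vsub xi0 be l + (1 - s) * vsub xi0 al l)).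
      eapply Rle_lt_trans. apply vnorm_convex; auto. unfold vdist in D1, D2.
      assert (s * vnorm (vsub xi0 be) <= s * d) by (apply Rmult_le_compat_l; lra).
      assert ((1 - s) * vnorm (vsub xi0 al) <= (1 - s) * d) by (apply Rmult_le_compat_l; lra).
      destruct (Req_dec s 0). subst. lra.
      assert (s * vnorm (vsub xi0 be) < s * d) by (apply Rmult_lt_compat_l; lra). lra.
      intros; unfold vsub, zeta; ring. }
    set (E := fun s x => Sol (Fcomb F (zeta s)) K x /\ vnorm x <= R).
    assert (ED : forall s x, 0 <= s <= 1 -> E s x -> D x).
    { intros s x Hs [H1 H2]. exists (zeta s). split; auto. }
    assert (Ecv : forall s, 0 <= s <= 1 -> vconvex (E s)).
    { intros s Hs x y t [Sx Bx] [Sy By] Ht. split.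
      apply (Sol_convex n K K); auto. apply Hmon, Nz; auto.
      eapply Rle_trans. apply vnorm_convex; auto. nra. }
    assert (Ene : forall s, 0 <= s <= 1 -> exists x, E s x) by (intros; apply Step3, Nz; auto).
    assert (Husc : forall O : vec n -> Prop, vopen O -> ropen (fun s => forall x, E s x -> O x)).
    { intros O HO s Hs Ps. apply NNPP; intro Hn.
      assert (Hk : forall k, exists p : Rdefinitions.R * vec n, 0 <= fst p <= 1 /\ Rabs (fst p - s) < / INR (S k) /\
          E (fst p) (snd p) /\ ~ O (snd p)).
      { intros k. apply NNPP; intro Hk. apply Hn. exists (/ INR (S k)). split. apply Rinv_0_lt_compat, lt_0_INR; lia.
        intros s' Hs' Hss' x Ex. apply NNPP; intro Ox. apply Hk. exists (s', x); simpl; auto. }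
      pose (ps k := proj1_sig (constructive_indefinite_description _ (Hk k))).
      assert (Hps : forall k, 0 <= fst (ps k) <= 1 /\ Rabs (fst (ps k) - s) < / INR (S k) /\
          E (fst (ps k)) (snd (ps k)) /\ ~ O (snd (ps k))).
      { intros k; unfold ps; destruct constructive_indefinite_description; auto. }
      destruct (BW_bounded n (fun k => snd (ps k)) R) as [phi [z [Hphi Hz]]].
      { intros k; apply Hps. }
      assert (Hsc : Un_cv (fun k => fst (ps k)) s).
      { intros e He. destruct (inv_small e He) as [N0 HN]. exists N0. intros k Hk'. unfold R_dist.
        destruct (Hps k) as [_ [H1 _]]. specialize (HN k Hk'). lra. }
      assert (Hzc : vcv (fun k => zeta (fst (ps (phi k)))) (zeta s)).
      { intros l. unfold zeta. pose proof (cv_subseq _ _ phi Hsc Hphi) as Hs2.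
        exact (CV_plus _ _ _ _ (CV_mult _ _ _ _ Hs2 (cv_const (be l))) (CV_mult _ _ _ _ (CV_minus _ _ _ _ (cv_const 1) Hs2) (cv_const (al l)))). }
      assert (Ez : E s z).
      { split. apply (Sol_closed_graph m n K K F (fun k => zeta (fst (ps (phi k)))) (zeta s) (fun k => snd (ps (phi k))) z hFc hKcl HKK Hzc Hz).
        intros k; apply Hps.
        apply vnorm_le. unfold R; lra. apply (cv_le (fun k => dot (snd (ps (phi k))) (snd (ps (phi k))))).
        apply dot_cv; auto. intros k. destruct (Hps (phi k)) as [_ [_ [[_ H] _]]]. apply vnorm_le_sq; auto. }
      destruct (open_seq n O (fun k => snd (ps (phi k))) z HO (Ps z Ez) Hz) as [N0 HN].
      apply (proj2 (proj2 (proj2 (Hps (phi N0))))). apply HN; auto. }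
    assert (Hcov : forall s, 0 <= s <= 1 -> forall x, E s x -> U x \/ V x) by (intros; apply Hc; eapply ED; eauto).
    assert (Hdj : forall s, 0 <= s <= 1 -> forall x, E s x -> U x -> V x -> False)
      by (intros s Hs x Ex; apply Hdis; eapply ED; eauto).
    assert (H1 : forall s, 0 <= s <= 1 -> (forall x, E s x -> U x) \/ (forall x, E s x -> V x)).
    { intros s Hs. destruct (classic (forall x, E s x -> U x)) as [Hp|Hp]; auto. right.
      apply not_all_ex_not in Hp. destruct Hp as [x Hx]. apply imply_to_and in Hx. destruct Hx as [Ex Ux].
      assert (Vx : V x) by (destruct (Hcov s Hs x Ex); tauto).
      intros y Ey. destruct (Hcov s Hs y Ey) as [Uy|Vy]; auto. exfalso.
      apply (convex_sep n (E s) U V (Ecv s Hs) HU HV (Hcov s Hs) (Hdj s Hs) y x); auto. }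
    apply (interval_conn (fun s => forall x, E s x -> U x) (fun s => forall x, E s x -> V x)); auto.
    - intros s Hs HP HQ. destruct (Ene s Hs) as [x Ex]. apply (Hdj s Hs x); auto.
    - assert (E0 : E 0 a).
      { split; auto. apply (Sol_ext m n K F al); auto. intros; unfold zeta; ring. }
      destruct (H1 0 ltac:(lra)) as [|HQ]; auto. exfalso. apply (Hdj 0 ltac:(lra) a); auto.
    - assert (E1 : E 1 b).
      { split; auto. apply (Sol_ext m n K F be); auto. intros; unfold zeta; ring. }
      destruct (H1 1 ltac:(lra)) as [HP|]; auto. exfalso. apply (Hdj 1 ltac:(lra) b); auto. }
  assert (HDA : forall x, D x -> A x).
  { apply (comp_absorb n W A D); auto. exists x0; auto. }
  exists d. split; auto. intros eta Heta Hde.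
  destruct (Step3 eta (conj Heta Hde)) as [x [Sx Bx]]. exists x. split; auto. apply HDA. exists eta; split; auto. split; auto. Qed.

Lemma simplex_convex m : vconvex (@simplex m).
Proof. intros x y t [Hx Sx] [Hy Sy] Ht. split.
  - intros l. specialize (Hx l); specialize (Hy l). nra.
  - rewrite fsum_plus, !fsum_scal, Sx, Sy. ring. Qed.

Lemma ri_convex m : vconvex (@ri_simplex m).
Proof. intros x y t [Hx Sx] [Hy Sy] Ht. split.
  - intros l. specialize (Hx l); specialize (Hy l). destruct (Req_dec t 0). subst; lra. nra.
  - rewrite fsum_plus, !fsum_scal, Sx, Sy. ring. Qed.

Lemma Sol_SolW m n (K : vec n -> Prop) (F : Fin.t m -> vec n -> vec n) xi x :
  simplex xi -> Sol (Fcomb F xi) K x -> SolW F K x.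
Proof. intros [Hxi Sxi] [Kx Hx]. split; auto. intros y Ky Hall. specialize (Hx y Ky). rewrite Fcomb_dot in Hx.
  assert (Hj : exists j, 0 < xi j).
  { apply NNPP; intro Hn. assert (fsum m xi <= 0).
    { rewrite <- (fsum_zero m). apply fsum_le. intros l. apply Rnot_lt_le. intro. apply Hn. exists l; auto. } lra. }
  destruct Hj as [j Hj].
  assert (0 < fsum m (fun l => xi l * dot (F l x) (vsub x y))).
  { apply (fsum_pos m _ j). intros l. apply Rmult_le_pos; auto. left; apply Hall. apply Rmult_lt_0_compat; auto. }
  rewrite (fsum_ext m _ (fun l => - (xi l * dot (F l x) (vsub x y)))) in Hx.
  2:{ intros l. rewrite (dot_vsub_swap n (F l x) y x). ring. }
  replace (fsum m (fun l => - (xi l * dot (F l x) (vsub x y)))) with (-1 * fsum m (fun l => xi l * dot (F l x) (vsub x y))) in Hx.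
  lra. rewrite <- fsum_scal. apply fsum_ext; intros; ring. Qed.

Theorem proposition3 (n m : nat) (K : vec n -> Prop) (F : Fin.t m -> vec n -> vec n)
  (hKne : exists x, K x) (hKcl : vclosed K) (hKcv : vconvex K)
  (hFc : forall l, vcontinuous_on K (F l))
  (hFmon : forall l, monotone_on K (F l)) :
  (forall A : vec n -> Prop, conn_component (SolW F K) A -> vbounded A ->
     rel_open simplex (fun xi => simplex xi /\ exists x, Sol (Fcomb F xi) K x /\ A x))
  /\
  (forall A : vec n -> Prop, conn_component (SolPr F K) A -> vbounded A ->
     rel_open ri_simplex (fun xi => ri_simplex xi /\ exists x, Sol (Fcomb F xi) K x /\ A x)).
Proof. split.
  - intros A HA HAb. split. intros xi [H _]; auto.
    intros xi [Hxi [x0 [Hx0 Ax0]]].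
    destruct (main_gen m n K F simplex (SolW F K) A hKcl hKcv hFc hFmon (simplex_convex m)
      (fun xi l H => proj1 H l) (fun xi x H1 H2 => Sol_SolW m n K F xi x H1 H2) HA HAb xi x0 Hxi Hx0 Ax0)
      as [d [Hd H]].
    exists d; split; [auto|]. intros eta Heta Hde. split; auto.
  - intros A HA HAb. split. intros xi [H _]; auto.
    intros xi [Hxi [x0 [Hx0 Ax0]]].
    destruct (main_gen m n K F ri_simplex (SolPr F K) A hKcl hKcv hFc hFmon (ri_convex m)
      (fun xi l H => Rlt_le _ _ (proj1 H l)) (fun xi x H1 H2 => ex_intro _ xi (conj H1 H2)) HA HAb xi x0 Hxi Hx0 Ax0)
      as [d [Hd H]].
    exists d; split; [auto|]. intros eta Heta Hde. split; auto. Qed.
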